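(* Let $A\in \mathbb{Z}^{m\times n}$, $b\in \mathbb{Z}^m$. If $Ax=b$ has a $p$-adic solution and a $q$-adic solution, for distinct primes $p$ and $q$, then $Ax=b$ has an integral solution.
   Context: For a prime $p$, a $p$-adic rational is a number $a/p^k$ with $a,k\in\mathbb{Z}$, $k\ge0$; a vector is $p$-adic if all entries are $p$-adic rationals. *)

(* Defs.v *)
From HB Require Import structures.
From mathcomp Require Import all_boot all_order all_algebra.
Set Implicit Arguments. Unset Strict Implicit. Unset Printing Implicit Defensive.
Import Order.TTheory GRing.Theory Num.Theory.
Local Open Scope ring_scope.

Definition padic_rat (p : nat) (x : rat) : Prop :=
  exists (a : int) (k : nat), x = a%:~R / (p%:R ^+ k).

Definition padic_vec (p n : nat) (x : 'cV[rat]_n) : Prop :=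
  forall i, padic_rat p (x i 0).

Definition intmx_to_rat (m n : nat) (A : 'M[int]_(m, n)) : 'M[rat]_(m, n) :=
  map_mx (fun z : int => z%:~R) A.

(* Main.v *)
Require Import Defs.
From HB Require Import structures.
From mathcomp Require Import all_boot all_order all_algebra.
From mathcomp Require Import ring.
Import Order.TTheory GRing.Theory Num.Theory.
Local Open Scope ring_scope.

Lemma common_denom (p n : nat) (x : 'cV[rat]_n) : (0 < p)%N -> padic_vec p x ->
  exists (K : nat) (u : 'cV[int]_n), intmx_to_rat u = (p%:R ^+ K) *: x.
Proof.
move=> p0 hx.
have H : forall i : 'I_n, exists ak : int * nat, x i 0 = ak.1%:~R / p%:R ^+ ak.2.
  by move=> i; case: (hx i) => a [k ->]; exists (a, k).
case: (fin_all_exists H) => f Hf.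
pose K := (\max_i (f i).2)%N.
exists K, (\col_i ((f i).1 * (p ^ (K - (f i).2))%:Z)).
apply/matrixP => i j; rewrite (ord1 j) !mxE Hf.
have le : ((f i).2 <= K)%N by rewrite /K (leq_bigmax i).
rewrite -(subnKC le) exprD.
have pn : (p%:R : rat) ^+ (f i).2 != 0 by rewrite expf_neq0 // pnatr_eq0 -lt0n.
rewrite intrM addKn.
have -> : ((p ^ (K - (f i).2))%N%:~R : rat) = p%:R ^+ (K - (f i).2) by exact: natrX.
by field.
Qed.

Lemma int_sol (m n p : nat) (A : 'M[int]_(m, n)) (b : 'cV[int]_m) :
  (0 < p)%N ->
  (exists x : 'cV[rat]_n, padic_vec p x /\ intmx_to_rat A *m x = intmx_to_rat b) ->
  exists (K : nat) (u : 'cV[int]_n), A *m u = (p ^ K)%N%:Z *: b.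
Proof.
move=> p0 [x [hx hAx]].
case: (@common_denom p n x p0 hx) => K [u hu].
exists K, u.
have E : intmx_to_rat (A *m u) = intmx_to_rat ((p ^ K)%N%:Z *: b).
  rewrite /intmx_to_rat (map_mxM intr) (map_mxZ intr).
  rewrite -/(intmx_to_rat A) -/(intmx_to_rat u) hu -scalemxAr hAx.
  by rewrite -(natrX rat) /intmx_to_rat.
apply/matrixP => i j.
have := congr1 (fun M : 'M[rat]_(m,1) => M i j) E; rewrite /intmx_to_rat !mxE.
exact: intr_inj.
Qed.

Theorem corollary2p5 (m n p q : nat) (A : 'M[int]_(m, n)) (b : 'cV[int]_m) :
  prime p -> prime q -> p != q ->
  (exists x : 'cV[rat]_n, padic_vec p x /\ intmx_to_rat A *m x = intmx_to_rat b) ->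
  (exists y : 'cV[rat]_n, padic_vec q y /\ intmx_to_rat A *m y = intmx_to_rat b) ->
  exists z : 'cV[int]_n, A *m z = b.
Proof.
move=> pp pq pneq hx hy.
case: (@int_sol m n p A b (prime_gt0 pp) hx) => K [u hu].
case: (@int_sol m n q A b (prime_gt0 pq) hy) => L [v hv].
have cop : coprime (p ^ K) (q ^ L).
  rewrite coprimeXl // coprime_sym coprimeXl // prime_coprime //.
  by rewrite dvdn_prime2 // eq_sym.
case: (Bezoutz (p ^ K)%N%:Z (q ^ L)%N%:Z) => s [t hst].
exists (s *: u + t *: v).
rewrite mulmxDr -!scalemxAr hu hv !scalerA -scalerDl hst.
by rewrite /gcdz /= (eqP cop) scale1r.
Qed.
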